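(* Let $\mathbf{A}$ be an atomic symmetric integral relation algebra that contains a flexible trio. Then $\mathbf{A}$ has the 1-point extension property and $\mathbf{A}$ is representable.
   Context: Relation algebras are in the sense of Tarski; $1'$ identity, $0'$ its complement (diversity element), $;$ relative product; integral: $1'$ is an atom; symmetric: $x^{\smile}=x$ for all $x$; a diversity atom is an atom below $0'$; representable: isomorphic to an algebra of binary relations. Flexible trio: three diversity atoms $a,b,c$ such that $a;a=b;b=c;c=1$, $a;b=a;c=b;c=0'$, and for every atom $x\notin\{1',a,b,c\}$: ($x;a=x;b=0'$) or ($x;a=x;c=0'$) or ($x;b=x;c=0'$). 1-point extension property: for $k<\omega$, $B_k(\mathbf{A})$ is the set of maps $\mu:k\times k\to At(\mathbf{A})$ with $\mu_{i,i}\le1'$, $\mu_{i,j}^{\smile}=\mu_{j,i}$ and $\mu_{i,l};\mu_{l,j}\ge\mu_{i,j}$ for all $i,j,l<k$; $\mu$ satisfies the identity condition if $\mu_{l,m}=1'$ iff $l=m$. $\mathbf{A}$ has the 1-point extension property if whenever $\mu\in B_k(\mathbf{A})$ satisfies the identity condition, $x,y$ are diversity atoms, $i,j<k$, $i\ne j$, and $\mu_{i,j}\le x;y$, there is $\mu'\in B_{k+1}(\mathbf{A})$ satisfying the identity condition with $\mu'_{l,m}=\mu_{l,m}$ for all $l,m<k$, $\mu'_{i,k}=x$ and $\mu'_{k,j}=y$. *)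

(* Defs.v *)
Record RAsig := {
  ra_car :> Type;
  ra_join : ra_car -> ra_car -> ra_car;
  ra_compl : ra_car -> ra_car;
  ra_comp : ra_car -> ra_car -> ra_car;
  ra_conv : ra_car -> ra_car;
  ra_id : ra_car
}.

Arguments ra_join {A} : rename.
Arguments ra_compl {A} : rename.
Arguments ra_comp {A} : rename.
Arguments ra_conv {A} : rename.
Arguments ra_id {A} : rename.

Section RA.
Context {A : RAsig}.

Definition ra_meet (x y : A) : A := ra_compl (ra_join (ra_compl x) (ra_compl y)).
Definition ra_zero : A := ra_meet ra_id (ra_compl ra_id).
Definition ra_top : A := ra_compl ra_zero.
Definition ra_div : A := ra_compl ra_id.
Definition ra_le (x y : A) : Prop := ra_join x y = y.

(* Tarski's axioms for relation algebras (Maddux's equational form R1-R10). *)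
Definition is_RA : Prop :=
  (forall x y : A, ra_join x y = ra_join y x) /\
  (forall x y z : A, ra_join x (ra_join y z) = ra_join (ra_join x y) z) /\
  (forall x y : A, ra_join (ra_compl (ra_join (ra_compl x) y))
                           (ra_compl (ra_join (ra_compl x) (ra_compl y))) = x) /\
  (forall x y z : A, ra_comp x (ra_comp y z) = ra_comp (ra_comp x y) z) /\
  (forall x y z : A, ra_comp (ra_join x y) z = ra_join (ra_comp x z) (ra_comp y z)) /\
  (forall x : A, ra_comp x ra_id = x) /\
  (forall x : A, ra_conv (ra_conv x) = x) /\
  (forall x y : A, ra_conv (ra_join x y) = ra_join (ra_conv x) (ra_conv y)) /\
  (forall x y : A, ra_conv (ra_comp x y) = ra_comp (ra_conv y) (ra_conv x)) /\
  (forall x y : A, ra_join (ra_comp (ra_conv x) (ra_compl (ra_comp x y))) (ra_compl y)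
                   = ra_compl y).

Definition is_atom (x : A) : Prop :=
  x <> ra_zero /\ forall y : A, ra_le y x -> y = ra_zero \/ y = x.

Definition is_atomic : Prop :=
  forall x : A, x <> ra_zero -> exists a : A, is_atom a /\ ra_le a x.

Definition is_integral : Prop := is_atom ra_id.

Definition is_symmetric : Prop := forall x : A, ra_conv x = x.

Definition diversity_atom (x : A) : Prop := is_atom x /\ ra_le x ra_div.

Definition flexible_trio (a b c : A) : Prop :=
  diversity_atom a /\ diversity_atom b /\ diversity_atom c /\
  ra_comp a a = ra_top /\ ra_comp b b = ra_top /\ ra_comp c c = ra_top /\
  ra_comp a b = ra_div /\ ra_comp a c = ra_div /\ ra_comp b c = ra_div /\
  (forall x : A, is_atom x -> x <> ra_id -> x <> a -> x <> b -> x <> c ->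
     (ra_comp x a = ra_div /\ ra_comp x b = ra_div) \/
     (ra_comp x a = ra_div /\ ra_comp x c = ra_div) \/
     (ra_comp x b = ra_div /\ ra_comp x c = ra_div)).

(* B_k(A): a map mu : k x k -> At(A); we represent it by a function on
   nat x nat of which only the entries with indices < k matter. *)
Definition in_Bk (k : nat) (mu : nat -> nat -> A) : Prop :=
  (forall i j, i < k -> j < k -> is_atom (mu i j)) /\
  (forall i, i < k -> ra_le (mu i i) ra_id) /\
  (forall i j, i < k -> j < k -> ra_conv (mu i j) = mu j i) /\
  (forall i j l, i < k -> j < k -> l < k ->
     ra_le (mu i j) (ra_comp (mu i l) (mu l j))).

Definition identity_cond (k : nat) (mu : nat -> nat -> A) : Prop :=
  forall l m, l < k -> m < k -> (mu l m = ra_id <-> l = m).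

Definition one_point_extension : Prop :=
  forall (k : nat) (mu : nat -> nat -> A),
    in_Bk k mu -> identity_cond k mu ->
    forall (x y : A) (i j : nat),
      diversity_atom x -> diversity_atom y -> i < k -> j < k -> i <> j ->
      ra_le (mu i j) (ra_comp x y) ->
      exists mu' : nat -> nat -> A,
        in_Bk (S k) mu' /\ identity_cond (S k) mu' /\
        (forall l m, l < k -> m < k -> mu' l m = mu l m) /\
        mu' i k = x /\ mu' k j = y.

(* Representable: isomorphic to a (set) relation algebra, i.e. there is an
   injective homomorphism into the full relation algebra Re(E) of all
   subrelations of some equivalence relation E on a set U. Relations are
   compared extensionally. *)
Definition representable : Prop :=
  exists (U : Type) (E : U -> U -> Prop) (h : A -> U -> U -> Prop),
    (forall u, E u u) /\ (forall u v, E u v -> E v u) /\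
    (forall u v w, E u v -> E v w -> E u w) /\
    (forall x u v, h x u v -> E u v) /\
    (forall x y, (forall u v, h x u v <-> h y u v) -> x = y) /\
    (forall x y u v, h (ra_join x y) u v <-> h x u v \/ h y u v) /\
    (forall x u v, h (ra_compl x) u v <-> E u v /\ ~ h x u v) /\
    (forall x y u v, h (ra_comp x y) u v <-> exists w, h x u w /\ h y w v) /\
    (forall x u v, h (ra_conv x) u v <-> h x v u) /\
    (forall u v, h ra_id u v <-> u = v).

End RA.

(* Main.v *)
Require Import Defs.
From Stdlib Require Import List Permutation.
Import ListNotations.

Section ACsec.
Variable T : Type.
Variable f : T -> T -> T.
Hypothesis fc : forall x y, f x y = f y x.
Hypothesis fa : forall x y z, f x (f y z) = f (f x y) z.

Inductive actree := ALeaf (t : T) | ANode (a b : actree).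
Fixpoint acev (t : actree) : T := match t with ALeaf x => x | ANode a b => f (acev a) (acev b) end.
Fixpoint evl (x : T) (l : list T) : T := match l with nil => x | y :: l' => f x (evl y l') end.
Fixpoint acfl (t : actree) : T * list T :=
  match t with
  | ALeaf x => (x, nil)
  | ANode a b => let (x, l) := acfl a in let (y, m) := acfl b in (x, l ++ y :: m)
  end.

Lemma evl_app : forall l x y m, evl x (l ++ y :: m) = f (evl x l) (evl y m).
Proof.
  induction l as [|z l IH]; intros x y m; simpl; auto.
  rewrite IH. rewrite fa. reflexivity.
Qed.

Lemma acfl_ok : forall t, acev t = let (x, l) := acfl t in evl x l.
Proof.
  induction t as [x|a IHa b IHb]; simpl; auto.
  destruct (acfl a) as [x l]; destruct (acfl b) as [y m].
  rewrite IHa, IHb, evl_app. reflexivity.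
Qed.


Definition evL (l : list T) (d : T) : T := match l with nil => d | x :: l => evl x l end.

Lemma evL_perm : forall l m d, Permutation l m -> evL l d = evL m d.
Proof.
  intros l m d H. induction H; simpl; auto.
  - destruct l, l'; simpl in *; auto.
    + apply Permutation_nil in H; discriminate.
    + apply Permutation_sym, Permutation_nil in H; discriminate.
    + rewrite IHPermutation; reflexivity.
  - destruct l; simpl; [apply fc|]. rewrite !fa, (fc y x). reflexivity.
  - congruence.
Qed.

Lemma ac_lemma : forall a b (d : T), Permutation (let (x,l) := acfl a in x :: l) (let (y,m) := acfl b in y :: m) ->
  acev a = acev b.
Proof.
  intros a b d H. rewrite !acfl_ok.
  pose proof (evL_perm _ _ d H) as E.
  destruct (acfl a), (acfl b); exact E.
Qed.
End ACsec.

Ltac ac_reify T f t :=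
  lazymatch t with
  | f ?a ?b => let ra := ac_reify T f a in let rb := ac_reify T f b in constr:(@ANode T ra rb)
  | _ => constr:(@ALeaf T t)
  end.

Ltac perm_pick a m :=
  lazymatch m with
  | a :: ?r => let T := type of a in constr:((@nil T, r))
  | ?b :: ?r => let p := perm_pick a r in
               lazymatch p with (?l1, ?l2) => constr:((b :: l1, l2)) end
  end.

Ltac perm_solve :=
  lazymatch goal with
  | |- Permutation nil nil => apply perm_nil
  | |- Permutation (?a :: ?l) ?m =>
      let p := perm_pick a m in
      lazymatch p with (?l1, ?l2) =>
        change (Permutation (a :: l) (l1 ++ a :: l2));
        apply Permutation_cons_app; cbn [app]; perm_solve
      end
  end.

Ltac ac_prove f fc fa :=
  lazymatch goal with
  | |- @eq ?T ?a ?b =>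
    let ra := ac_reify T f a in let rb := ac_reify T f b in
    change (acev T f ra = acev T f rb);
    apply (ac_lemma T f fc fa ra rb a); cbn [acfl app]; perm_solve
  end.
From Stdlib Require Import List Permutation Classical_Prop Arith Lia ClassicalEpsilon ProofIrrelevance.

Section Bool.
Context {A : RAsig}.
Hypothesis Hc : forall x y : A, ra_join x y = ra_join y x.
Hypothesis Ha : forall x y z : A, ra_join x (ra_join y z) = ra_join (ra_join x y) z.
Hypothesis Hh : forall x y : A, ra_join (ra_compl (ra_join (ra_compl x) y))
                           (ra_compl (ra_join (ra_compl x) (ra_compl y))) = x.
Hypothesis Hdist : forall x y z : A, ra_comp (ra_join x y) z = ra_join (ra_comp x z) (ra_comp y z).
Hypothesis Hid : forall x : A, ra_comp x ra_id = x.
Hypothesis Hcc : forall x y : A, ra_conv (ra_comp x y) = ra_comp (ra_conv y) (ra_conv x).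
Hypothesis H10 : forall x y : A, ra_join (ra_comp (ra_conv x) (ra_compl (ra_comp x y))) (ra_compl y)
                   = ra_compl y.
Hypothesis Hsym : forall x : A, ra_conv x = x.
Hypothesis Hint : is_integral (A:=A).
Hypothesis Hat : is_atomic (A:=A).

Local Notation "x ⊕ y" := (ra_join x y) (at level 50, left associativity).
Local Notation "∼ x" := (ra_compl x) (at level 35, right associativity).
Local Notation TOP := (@ra_top A).
Local Notation ZERO := (@ra_zero A).
Local Notation ID := (@ra_id A).
Local Notation "x ⊙ y" := (ra_comp x y) (at level 40, left associativity).
Local Notation DIV := (@ra_div A).
Ltac ac := ac_prove (@ra_join A) Hc Ha.

Lemma dn : forall x : A, ∼∼x = x.
Proof.
  intro x.
  set (x1 := ∼x). set (x2 := ∼x1). set (x3 := ∼x2). set (x4 := ∼x3).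
  set (a := ∼(x4 ⊕ x2)). set (b := ∼(x4 ⊕ x3)).
  set (c := ∼(x3 ⊕ x2)). set (d := ∼(x3 ⊕ x3)).
  assert (eAB : a ⊕ b = x3) by apply Hh.
  assert (eCD : c ⊕ d = x2) by apply Hh.
  assert (eDB : d ⊕ b = x2).
  { etransitivity; [|apply (Hh x2 x3)]. unfold d, b. f_equal. f_equal. apply Hc. }
  assert (eCA : c ⊕ a = x1).
  { etransitivity; [|apply (Hh x1 x3)]. unfold c, a. f_equal; f_equal; apply Hc. }
  transitivity (∼(x3 ⊕ x1) ⊕ ∼((a ⊕ b) ⊕ (c ⊕ d))).
  { rewrite eAB, eCD. symmetry. apply Hh. }
  transitivity (∼((d ⊕ b) ⊕ (c ⊕ a)) ⊕ ∼(x1 ⊕ x3)).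
  2:{ rewrite eDB, eCA. etransitivity; [|apply (Hh x x2)]. f_equal. f_equal. apply Hc. }
  rewrite (Hc (∼(x3 ⊕ x1))). f_equal.
  - f_equal. ac.
  - f_equal. apply Hc.
Qed.

Lemma L2 : forall x y : A, x ⊕ ∼x = y ⊕ ∼y.
Proof.
  intros x y.
  pose proof (Hh (∼x) y) as e2. rewrite dn in e2.
  pose proof (Hh (∼y) x) as f2. rewrite dn in f2.
  transitivity ((∼(∼x ⊕ y) ⊕ ∼(∼x ⊕ ∼y)) ⊕ (∼(x ⊕ y) ⊕ ∼(x ⊕ ∼y))).
  { rewrite (Hh x y), e2. reflexivity. }
  transitivity ((∼(∼y ⊕ x) ⊕ ∼(∼y ⊕ ∼x)) ⊕ (∼(y ⊕ x) ⊕ ∼(y ⊕ ∼x))).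
  2:{ rewrite (Hh y x), f2. reflexivity. }
  rewrite (Hc (∼y) x), (Hc (∼y) (∼x)), (Hc y x), (Hc y (∼x)). ac.
Qed.

Lemma top_eq : TOP = ∼ID ⊕ ID.
Proof.
  unfold ra_top, ra_zero, ra_meet. rewrite !dn. reflexivity.
Qed.

Lemma topc : forall x : A, x ⊕ ∼x = TOP.
Proof. intro x. rewrite top_eq, (Hc (∼ID)). apply L2. Qed.

Lemma zero_eq : ZERO = ∼TOP.
Proof. unfold ra_top. rewrite dn. reflexivity. Qed.

Lemma F1 : forall x : A, ∼TOP ⊕ ∼(∼x ⊕ ∼x) = x.
Proof.
  intro x. rewrite <- (topc x) at 1. rewrite (Hc x). apply Hh.
Qed.

Lemma zz : ∼TOP ⊕ ∼TOP = ∼TOP.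
Proof.
  assert (e1 : ∼TOP ⊕ ∼(∼TOP ⊕ ∼TOP) = TOP) by apply F1.
  pose proof (Hh (∼TOP ⊕ ∼TOP) TOP) as e2.
  assert (e3 : ∼(∼TOP ⊕ ∼TOP) ⊕ ∼TOP = TOP) by (rewrite Hc; exact e1).
  rewrite e3 in e2.
  assert (e4 : ∼(∼TOP ⊕ ∼TOP) ⊕ TOP = TOP ⊕ TOP).
  { rewrite <- e1 at 5. rewrite Ha. rewrite (topc TOP). apply Hc. }
  rewrite e4 in e2.
  pose proof (F1 (∼TOP)) as e5. rewrite dn in e5.
  rewrite <- e2, Hc. exact e5.
Qed.

Lemma zero_r : forall x : A, x ⊕ ∼TOP = x.
Proof.
  intro x. rewrite <- (F1 x) at 1. rewrite <- Ha, (Hc _ (∼TOP)), Ha, zz. apply F1.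
Qed.

Lemma idem : forall x : A, x ⊕ x = x.
Proof.
  intro x. pose proof (F1 (∼x)) as e. rewrite dn, Hc, zero_r in e.
  rewrite <- (dn (x ⊕ x)), e. apply dn.
Qed.

Lemma one_r : forall x : A, x ⊕ TOP = TOP.
Proof. intro x. rewrite <- (topc x), Ha, idem. reflexivity. Qed.

Lemma le_refl : forall x : A, ra_le x x.
Proof. intro; apply idem. Qed.
Lemma le_trans : forall x y z : A, ra_le x y -> ra_le y z -> ra_le x z.
Proof. unfold ra_le; intros x y z h1 h2. rewrite <- h2, Ha, h1. reflexivity. Qed.
Lemma le_antisym : forall x y : A, ra_le x y -> ra_le y x -> x = y.
Proof. unfold ra_le; intros x y h1 h2. rewrite <- h1, <- h2 at 1. apply Hc. Qed.
Lemma le_joinl : forall x y : A, ra_le x (x ⊕ y).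
Proof. unfold ra_le; intros. rewrite Ha, idem. reflexivity. Qed.
Lemma le_joinr : forall x y : A, ra_le y (x ⊕ y).
Proof. intros. rewrite Hc. apply le_joinl. Qed.
Lemma join_lub : forall x y z : A, ra_le x z -> ra_le y z -> ra_le (x ⊕ y) z.
Proof. unfold ra_le; intros x y z h1 h2. rewrite <- Ha, h2, h1. reflexivity. Qed.
Lemma le_compl : forall x y : A, ra_le x y -> ra_le (∼y) (∼x).
Proof.
  unfold ra_le; intros x y h.
  pose proof (Hh (∼x) y) as e. rewrite dn, h in e.
  rewrite <- e, Ha, idem. reflexivity.
Qed.
Lemma le_compl_swap : forall x y : A, ra_le x (∼y) -> ra_le y (∼x).
Proof. intros x y h. apply le_compl in h. rewrite dn in h. exact h. Qed.
Lemma meet_le_l : forall x y : A, ra_le (ra_meet x y) x.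
Proof. intros. unfold ra_meet. rewrite <- (Hh x y) at 2. apply le_joinr. Qed.
Lemma meet_comm : forall x y : A, ra_meet x y = ra_meet y x.
Proof. intros. unfold ra_meet. rewrite Hc. reflexivity. Qed.
Lemma meet_le_r : forall x y : A, ra_le (ra_meet x y) y.
Proof. intros. rewrite meet_comm. apply meet_le_l. Qed.
Lemma meet_glb : forall x y z : A, ra_le z x -> ra_le z y -> ra_le z (ra_meet x y).
Proof.
  intros x y z h1 h2. apply le_compl in h1. apply le_compl in h2.
  pose proof (join_lub _ _ _ h1 h2) as h. apply le_compl in h. rewrite dn in h. exact h.
Qed.
Lemma zero_Z : ZERO = ∼TOP.
Proof. apply zero_eq. Qed.
Lemma le_zero : forall x : A, ra_le ZERO x.
Proof. intro x. unfold ra_le. rewrite zero_Z, Hc. apply zero_r. Qed.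
Lemma le_top : forall x : A, ra_le x TOP.
Proof. intro; apply one_r. Qed.
Lemma meet_compl : forall x : A, ra_meet x (∼x) = ZERO.
Proof. intro x. unfold ra_meet. rewrite dn, Hc, topc. symmetry; apply zero_Z. Qed.
Lemma le_zero_eq : forall x : A, ra_le x ZERO -> x = ZERO.
Proof. intros x h. apply le_antisym; [exact h| apply le_zero]. Qed.
Lemma decomp : forall x y : A, x = ra_meet x (∼y) ⊕ ra_meet x y.
Proof. intros. unfold ra_meet. rewrite dn. symmetry. apply Hh. Qed.
Lemma join_zero : forall x : A, x ⊕ ZERO = x.
Proof. intros. rewrite zero_Z. apply zero_r. Qed.

Lemma meet_zero_le : forall x y : A, ra_meet x y = ZERO -> ra_le x (∼y).
Proof.
  intros x y h. rewrite (decomp x y), h, join_zero. apply meet_le_r.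
Qed.

Lemma le_both_zero : forall x y : A, ra_le x y -> ra_le x (∼y) -> x = ZERO.
Proof.
  intros x y h1 h2. apply le_zero_eq. rewrite <- (meet_compl y). apply meet_glb; auto.
Qed.

Lemma atom_or : forall a x : A, is_atom a -> ra_le a x \/ ra_le a (∼x).
Proof.
  intros a x [hn ha].
  destruct (ha (ra_meet a x) (meet_le_l _ _)) as [h|h].
  - right. apply meet_zero_le. rewrite meet_comm. 
    rewrite meet_comm in h. exact (eq_trans (meet_comm _ _) (eq_trans (meet_comm _ _) h)).
  - left. rewrite <- h. apply meet_le_r.
Qed.

Lemma atom_not_le : forall a x : A, is_atom a -> ~ ra_le a x -> ra_le a (∼x).
Proof. intros a x h1 h2. destruct (atom_or a x h1); tauto. Qed.

Lemma atom_compl : forall a x : A, is_atom a -> ra_le a (∼x) -> ~ ra_le a x.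
Proof. intros a x [hn _] h1 h2. apply hn. apply (le_both_zero a x); auto. Qed.

Lemma atom_join : forall a x y : A, is_atom a -> ra_le a (x ⊕ y) -> ra_le a x \/ ra_le a y.
Proof.
  intros a x y ha h.
  destruct (atom_or a x ha) as [h1|h1]; [auto|].
  destruct (atom_or a y ha) as [h2|h2]; [auto|].
  exfalso. apply (atom_compl a (x ⊕ y) ha); auto.
  pose proof (meet_glb _ _ _ h1 h2) as h3. unfold ra_meet in h3. rewrite !dn in h3. exact h3.
Qed.

Lemma atom_le_eq : forall a b : A, is_atom a -> is_atom b -> ra_le a b -> a = b.
Proof. intros a b [ha _] [_ hb] h. destruct (hb a h); tauto. Qed.

Lemma separate : is_atomic (A:=A) -> forall x y : A, x <> y ->
  exists a, is_atom a /\ ((ra_le a x /\ ~ ra_le a y) \/ (ra_le a y /\ ~ ra_le a x)).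
Proof.
  intros hat x y hne.
  assert (H1 : forall u v : A, ~ ra_le u v -> exists a, is_atom a /\ ra_le a u /\ ~ ra_le a v).
  { intros u v hnl.
    assert (hm : ra_meet u (∼v) <> ZERO).
    { intro e. apply hnl. rewrite (decomp u v), e, Hc, join_zero. apply meet_le_r. }
    destruct (hat _ hm) as [a [ha hle]]. exists a. split; [exact ha|]. split.
    - exact (le_trans _ _ _ hle (meet_le_l _ _)).
    - apply atom_compl; auto. exact (le_trans _ _ _ hle (meet_le_r _ _)). }
  destruct (Classical_Prop.classic (ra_le x y)) as [h1|h1].
  - destruct (Classical_Prop.classic (ra_le y x)) as [h2|h2].
    + exfalso; apply hne, le_antisym; auto.
    + destruct (H1 _ _ h2) as [a [? [? ?]]]. exists a; auto.
  - destruct (H1 _ _ h1) as [a [? [? ?]]]. exists a; auto.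
Qed.

Lemma comp_comm : forall x y : A, x ⊙ y = y ⊙ x.
Proof. intros. rewrite <- (Hsym (x ⊙ y)), Hcc, !Hsym. reflexivity. Qed.
Lemma comp_mono_l : forall x y z : A, ra_le x y -> ra_le (x ⊙ z) (y ⊙ z).
Proof. unfold ra_le; intros x y z h. rewrite <- Hdist, h. reflexivity. Qed.
Lemma comp_mono_r : forall x y z : A, ra_le x y -> ra_le (z ⊙ x) (z ⊙ y).
Proof. intros. rewrite !(comp_comm z). apply comp_mono_l; auto. Qed.
Lemma comp_mono : forall x y x' y' : A, ra_le x x' -> ra_le y y' -> ra_le (x ⊙ y) (x' ⊙ y').
Proof. intros. apply le_trans with (x' ⊙ y); [apply comp_mono_l|apply comp_mono_r]; auto. Qed.
Lemma id_l : forall x : A, ID ⊙ x = x.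
Proof. intros. rewrite comp_comm. apply Hid. Qed.
Lemma R10' : forall x y : A, ra_le (x ⊙ ∼(x ⊙ y)) (∼y).
Proof. intros. unfold ra_le. rewrite <- (Hsym x) at 1. apply H10. Qed.
Lemma K : forall u v w : A, ra_le u (∼(v ⊙ w)) -> ra_le w (∼(v ⊙ u)).
Proof.
  intros u v w h. apply le_compl_swap.
  apply le_trans with (v ⊙ ∼(v ⊙ w)); [apply comp_mono_r; auto | apply R10'].
Qed.
Lemma id_atom : is_atom ID.
Proof. exact Hint. Qed.
Lemma atom_nz : forall a : A, is_atom a -> a <> ZERO.
Proof. intros a [h _]; exact h. Qed.

Lemma peirce : forall p q r : A, is_atom p -> is_atom q -> ra_le p (q ⊙ r) -> ra_le q (p ⊙ r).
Proof.
  intros p q r hp hq h.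
  destruct (atom_or q (p ⊙ r) hq) as [h1|h1]; [exact h1|].
  exfalso. apply K in h1. rewrite comp_comm in h1. apply K in h1.
  exact (atom_compl p _ hp h1 h).
Qed.

Lemma peirce2 : forall z x y : A, is_atom z -> ra_le z (x ⊙ y) ->
  exists x', is_atom x' /\ ra_le x' x /\ ra_le z (x' ⊙ y).
Proof.
  intros z x y hz h.
  assert (hm : ra_meet x (y ⊙ z) <> ZERO).
  { intro e. apply meet_zero_le in e. apply K in e. rewrite comp_comm in e.
    exact (atom_compl z _ hz e h). }
  destruct (Hat _ hm) as [x' [hx' hle]]. exists x'. split; [auto|]. split.
  - exact (le_trans _ _ _ hle (meet_le_l _ _)).
  - assert (h2 : ra_le x' (y ⊙ z)) by exact (le_trans _ _ _ hle (meet_le_r _ _)).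
    destruct (atom_or z (x' ⊙ y) hz) as [h1|h1]; [exact h1|].
    exfalso. apply K in h1. rewrite comp_comm in h1. apply K in h1. rewrite comp_comm in h1.
    exact (atom_compl x' _ hx' h1 h2).
Qed.

Lemma decomp_atoms : forall z x y : A, is_atom z -> ra_le z (x ⊙ y) ->
  exists x' y', is_atom x' /\ is_atom y' /\ ra_le x' x /\ ra_le y' y /\ ra_le z (x' ⊙ y').
Proof.
  intros z x y hz h.
  destruct (peirce2 z x y hz h) as [x' [h1 [h2 h3]]].
  rewrite comp_comm in h3.
  destruct (peirce2 z y x' hz h3) as [y' [h4 [h5 h6]]].
  exists x', y'. rewrite comp_comm in h6. auto 10.
Qed.

Lemma id_le_dd : forall d : A, is_atom d -> ra_le ID (d ⊙ d).
Proof.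
  intros d hd. destruct (atom_or ID (d ⊙ d) id_atom) as [h|h]; [exact h|].
  exfalso. apply K in h. rewrite Hid in h. apply (atom_nz d hd).
  apply (le_both_zero d d); auto. apply le_refl.
Qed.

Lemma id_le_xy : forall x y : A, is_atom x -> is_atom y -> ra_le ID (x ⊙ y) -> x = y.
Proof.
  intros x y hx hy h. apply peirce in h; auto using id_atom. rewrite id_l in h.
  apply atom_le_eq; auto.
Qed.

Lemma atom_div : forall a : A, is_atom a -> a <> ID -> diversity_atom a.
Proof.
  intros a ha hne. split; [auto|]. apply atom_not_le; auto.
  intro h. apply hne. apply atom_le_eq; auto using id_atom.
Qed.

Lemma div_not_le_id : forall d : A, diversity_atom d -> ~ ra_le d ID.
Proof. intros d [hd h]. apply atom_compl; auto. Qed.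

Lemma div_ne_id : forall d : A, diversity_atom d -> d <> ID.
Proof. intros d hd e. apply (div_not_le_id d hd). rewrite e. apply le_refl. Qed.

Lemma atom_cases : forall a : A, is_atom a -> a = ID \/ diversity_atom a.
Proof.
  intros a ha. destruct (Classical_Prop.classic (a = ID)); [auto|right; apply atom_div; auto].
Qed.

Lemma tri_p1 : forall p q r : A, is_atom p -> is_atom q -> ra_le p (q ⊙ r) -> ra_le q (r ⊙ p).
Proof. intros. rewrite comp_comm. apply peirce; auto. Qed.

Variables a b c : A.
Hypothesis Hflex : flexible_trio a b c.
Definition trio (t : A) : Prop := t = a \/ t = b \/ t = c.

Lemma trio_div : forall t, trio t -> diversity_atom t.
Proof. destruct Hflex as [ha [hb [hc _]]]. intros t [->|[->| ->]]; auto. Qed.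
Lemma trio_atom : forall t, trio t -> is_atom t.
Proof. intros t h. apply trio_div in h. destruct h; auto. Qed.

Lemma trio_pair : forall t1 t2, trio t1 -> trio t2 -> ra_le DIV (t1 ⊙ t2).
Proof.
  destruct Hflex as [ha [hb [hc [haa [hbb [hcc [hab [hac [hbc _]]]]]]]]].
  assert (ht : ra_le DIV TOP) by apply le_top.
  intros t1 t2 [->|[->| ->]] [->|[->| ->]];
    rewrite ?haa, ?hbb, ?hcc, ?hab, ?hac, ?hbc; auto using le_refl;
    rewrite comp_comm; rewrite ?haa, ?hbb, ?hcc, ?hab, ?hac, ?hbc; auto using le_refl.
Qed.

Lemma trio_tri : forall t1 t2 d, trio t1 -> trio t2 -> diversity_atom d -> ra_le d (t1 ⊙ t2).
Proof.
  intros t1 t2 d h1 h2 [hd hdd]. exact (le_trans _ _ _ hdd (trio_pair t1 t2 h1 h2)).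
Qed.

Definition good2 (z t : A) : Prop := ra_le DIV (z ⊙ t).

Lemma good_pairs : forall z, diversity_atom z ->
  (good2 z a /\ good2 z b) \/ (good2 z a /\ good2 z c) \/ (good2 z b /\ good2 z c).
Proof.
  intros z hz. unfold good2.
  assert (ta : trio a) by (left; auto). assert (tb : trio b) by (right; left; auto).
  assert (tc : trio c) by (right; right; auto).
  destruct (Classical_Prop.classic (z = a)) as [->|na];
    [left; split; apply trio_pair; auto|].
  destruct (Classical_Prop.classic (z = b)) as [->|nb];
    [left; split; apply trio_pair; auto|].
  destruct (Classical_Prop.classic (z = c)) as [->|nc];
    [right; left; split; apply trio_pair; auto|].
  destruct Hflex as [_ [_ [_ [_ [_ [_ [_ [_ [_ hx]]]]]]]]].
  pose proof (div_ne_id z hz) as hne. destruct hz as [hza _].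
  destruct (hx z hza hne na nb nc) as [[e1 e2]|[[e1 e2]|[e1 e2]]];
    [left|right;left|right;right]; rewrite e1, e2; split; apply le_refl.
Qed.

Lemma good_pick : forall z1 z2, diversity_atom z1 -> diversity_atom z2 ->
  exists t, trio t /\ good2 z1 t /\ good2 z2 t.
Proof.
  intros z1 z2 h1 h2.
  assert (ta : trio a) by (left; auto). assert (tb : trio b) by (right; left; auto).
  assert (tc : trio c) by (right; right; auto).
  destruct (good_pairs z1 h1) as [[? ?]|[[? ?]|[? ?]]];
  destruct (good_pairs z2 h2) as [[? ?]|[[? ?]|[? ?]]];
  first [exists a; now auto | exists b; now auto | exists c; now auto].
Qed.

Lemma good_use : forall z t w, good2 z t -> is_atom t -> diversity_atom w -> ra_le t (w ⊙ z).
Proof.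
  intros z t w hg ht [hw hwd]. apply peirce; auto.
  rewrite comp_comm. exact (le_trans _ _ _ hwd hg).
Qed.


Lemma tri_close : forall (X : Type) (P : X -> Prop) (g : X -> X -> A),
  (forall l m, P l -> P m -> g l m = g m l) ->
  (forall l, P l -> g l l = ID) ->
  (forall l m, P l -> P m -> l <> m -> is_atom (g l m)) ->
  (forall l m p, P l -> P m -> P p -> l <> m -> l <> p -> m <> p -> ra_le (g l m) (g l p ⊙ g p m)) ->
  forall l m p, P l -> P m -> P p -> ra_le (g l m) (g l p ⊙ g p m).
Proof.
  intros X P g hs hd ha ht l m p hl hm hp.
  destruct (Classical_Prop.classic (l = m)) as [<-|hlm].
  - rewrite hd by auto. destruct (Classical_Prop.classic (l = p)) as [<-|hlp].
    + rewrite hd, Hid by auto. apply le_refl.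
    + rewrite (hs p l) by auto. apply id_le_dd. auto.
  - destruct (Classical_Prop.classic (l = p)) as [<-|hlp].
    + rewrite hd, id_l by auto. apply le_refl.
    + destruct (Classical_Prop.classic (m = p)) as [<-|hmp].
      * rewrite hd, Hid by auto. apply le_refl.
      * apply ht; auto.
Qed.

Lemma lt_S_cases : forall l k, l < S k -> l < k \/ l = k.
Proof. intros; lia. Qed.

Theorem ope : one_point_extension (A:=A).
Proof.
  unfold one_point_extension.
  intros k mu [hatm [hdiag [hconv htri]]] hidc x y i j hx hy hi hj hij hle.
  destruct (good_pick x y hx hy) as [t0 [ht0 [gx gy]]].
  set (f := fun m => if Nat.eq_dec m i then x else if Nat.eq_dec m j then y else t0).
  set (mu' := fun l m => if lt_dec l k then (if lt_dec m k then mu l m else f l)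
                         else (if lt_dec m k then f m else ID)).
  assert (e_in : forall l m, l < k -> m < k -> mu' l m = mu l m).
  { intros l m hl hm. unfold mu'. destruct (lt_dec l k); [|lia]. destruct (lt_dec m k); [auto|lia]. }
  assert (e_lk : forall l, l < k -> mu' l k = f l).
  { intros l hl. unfold mu'. destruct (lt_dec l k); [|lia]. destruct (lt_dec k k); [lia|auto]. }
  assert (e_kl : forall l, l < k -> mu' k l = f l).
  { intros l hl. unfold mu'. destruct (lt_dec k k); [lia|]. destruct (lt_dec l k); [auto|lia]. }
  assert (e_kk : mu' k k = ID).
  { unfold mu'. destruct (lt_dec k k); [lia|auto]. }
  assert (fi : f i = x). { unfold f. destruct (Nat.eq_dec i i); [auto|lia]. }
  assert (fj : f j = y). { unfold f. destruct (Nat.eq_dec j i); [lia|]. destruct (Nat.eq_dec j j); [auto|lia]. }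
  assert (fo : forall m, m <> i -> m <> j -> f m = t0).
  { intros m h1 h2. unfold f. destruct (Nat.eq_dec m i); [lia|]. destruct (Nat.eq_dec m j); [lia|auto]. }
  assert (fdiv : forall m, diversity_atom (f m)).
  { intro m. unfold f. destruct (Nat.eq_dec m i); auto. destruct (Nat.eq_dec m j); auto. apply trio_div; auto. }
  assert (musym : forall l m, l < k -> m < k -> mu l m = mu m l).
  { intros l m hl hm. rewrite <- (hconv l m hl hm). symmetry. apply Hsym. }
  assert (mudiv : forall l m, l < k -> m < k -> l <> m -> diversity_atom (mu l m)).
  { intros l m hl hm hne. apply atom_div; auto. intro e. apply hne. apply (hidc l m hl hm). auto. }
  assert (Ci : forall m, m < k -> m <> i -> m <> j -> ra_le (mu i m) (x ⊙ t0)).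
  { intros m hm h1 h2. assert (h := good_use x t0 (mu m i) gx (trio_atom t0 ht0) (mudiv m i hm hi h1)).
    apply peirce in h; [| apply trio_atom; auto | apply (mudiv m i hm hi h1)].
    rewrite (musym i m hi hm), comp_comm. exact h. }
  assert (Cj : forall m, m < k -> m <> i -> m <> j -> ra_le (mu j m) (y ⊙ t0)).
  { intros m hm h1 h2. assert (h := good_use y t0 (mu m j) gy (trio_atom t0 ht0) (mudiv m j hm hj h2)).
    apply peirce in h; [| apply trio_atom; auto | apply (mudiv m j hm hj h2)].
    rewrite (musym j m hj hm), comp_comm. exact h. }
  assert (C1 : forall l m, l < k -> m < k -> l <> m -> l = i \/ l = j -> ra_le (mu l m) (f l ⊙ f m)).
  { intros l m hl hm hne [->| ->].
    - rewrite fi. destruct (Nat.eq_dec m j) as [->|hmj].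
      + rewrite fj. exact hle.
      + rewrite fo by auto. apply Ci; auto.
    - rewrite fj. destruct (Nat.eq_dec m i) as [->|hmi].
      + rewrite fi, musym, comp_comm by auto. exact hle.
      + rewrite fo by auto. apply Cj; auto. }
  assert (C : forall l m, l < k -> m < k -> l <> m -> ra_le (mu l m) (f l ⊙ f m)).
  { intros l m hl hm hne.
    destruct (Classical_Prop.classic (l = i \/ l = j)) as [h|h]; [apply C1; auto|].
    destruct (Classical_Prop.classic (m = i \/ m = j)) as [h'|h'].
    - rewrite musym, comp_comm by auto. apply C1; auto.
    - rewrite !fo by tauto. apply trio_tri; auto. }
  exists mu'. split; [|split; [|split; [|split]]].
  -
    assert (hatom : forall l m, l < S k -> m < S k -> is_atom (mu' l m)).
    { intros l m hl hm.
      destruct (lt_S_cases _ _ hl) as [hl'| ->]; destruct (lt_S_cases _ _ hm) as [hm'| ->].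
      - rewrite e_in; auto.
      - rewrite e_lk; auto. apply fdiv.
      - rewrite e_kl; auto. apply fdiv.
      - rewrite e_kk. apply id_atom. }
    assert (hsy : forall l m, l < S k -> m < S k -> mu' l m = mu' m l).
    { intros l m hl hm.
      destruct (lt_S_cases _ _ hl) as [hl'| ->]; destruct (lt_S_cases _ _ hm) as [hm'| ->].
      - rewrite !e_in; auto.
      - rewrite e_lk, e_kl; auto.
      - rewrite e_lk, e_kl; auto.
      - auto. }
    assert (hdd : forall l, l < S k -> mu' l l = ID).
    { intros l hl. destruct (lt_S_cases _ _ hl) as [hl'| ->]; auto.
      rewrite e_in by auto. apply (hidc l l hl' hl'). auto. }
    split; [exact hatom|]. split.
    { intros l hl. rewrite hdd by auto. apply le_refl. }
    split.
    { intros l m hl hm. rewrite Hsym. apply hsy; auto. }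
    intros l m p hl hm hp.
    apply (tri_close nat (fun l => l < S k) mu'); auto.
    clear l m p hl hm hp.
    intros l m p hl hm hp hlm hlp hmp.
    destruct (lt_S_cases _ _ hl) as [hl'| ->]; destruct (lt_S_cases _ _ hm) as [hm'| ->];
    destruct (lt_S_cases _ _ hp) as [hp'| ->]; try lia.
    + rewrite !e_in; auto.
    + rewrite e_in, e_lk, e_kl by auto. apply C; auto.
    + rewrite (e_lk l), (e_lk p), (e_in l p) by auto.
      assert (h := C l p hl' hp' ltac:(auto)). apply peirce in h;
        [exact h | apply hatm; auto | apply (proj1 (fdiv _))].
    + rewrite (e_kl m), (e_kl p), (e_in p m) by auto.
      assert (h := C p m hp' hm' ltac:(auto)). rewrite comp_comm in h. apply peirce in h;
        [rewrite comp_comm; exact h | apply hatm; auto | apply (proj1 (fdiv _))].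
  -
    intros l m hl hm. split.
    + intro e. destruct (lt_S_cases _ _ hl) as [hl'| ->]; destruct (lt_S_cases _ _ hm) as [hm'| ->]; auto.
      * rewrite e_in in e by auto. apply (hidc l m hl' hm'); auto.
      * rewrite e_lk in e by auto. exfalso; exact (div_ne_id _ (fdiv l) e).
      * rewrite e_kl in e by auto. exfalso; exact (div_ne_id _ (fdiv m) e).
    + intros <-. destruct (lt_S_cases _ _ hl) as [hl'| ->]; auto.
      rewrite e_in by auto. apply (hidc l l hl' hl'). auto.
  - intros l m hl hm. apply e_in; auto.
  - rewrite e_lk; auto.
  - rewrite e_kl; auto.
Qed.

Inductive pt : Type := root : pt | nw : pt -> pt -> A -> A -> pt.

Definition dec (P : Prop) : {P} + {~ P} := excluded_middle_informative P.

Fixpoint psize (p : pt) : nat := match p with root => 0 | nw u v _ _ => S (psize u + psize v) end.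

Definition C (p q : pt) : option A :=
  match p with
  | root => None
  | nw u v x y => if dec (q = u) then Some x else if dec (q = v) then Some y else None
  end.
Definition Cs (p q : pt) : option A := match C p q with Some z => Some z | None => C q p end.
Definition isparent (r p : pt) : Prop := exists u v x y, p = nw u v x y /\ (r = u \/ r = v).
Definition Good (p q : pt) (t : A) : Prop :=
  forall r z1 z2, (isparent r p \/ isparent r q) -> Cs p r = Some z1 -> Cs r q = Some z2 ->
    ra_le t (z1 ⊙ z2).
Definition choose (p q : pt) : A :=
  if dec (Good p q a) then a else if dec (Good p q b) then b else c.
Definition L (p q : pt) : A :=
  if dec (p = q) then ID else match Cs p q with Some z => z | None => choose p q end.
Fixpoint valid (p : pt) : Prop :=
  match p with
  | root => True
  | nw u v x y => valid u /\ valid v /\ diversity_atom x /\ diversity_atom y /\ ra_le (L u v) (x ⊙ y)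
  end.

Lemma parent_size : forall r p, isparent r p -> psize r < psize p.
Proof. intros r p [u [v [x [y [-> [-> | ->]]]]]]; simpl; lia. Qed.

Lemma C_parent : forall p q z, C p q = Some z -> isparent q p.
Proof.
  intros [|u v x y] q z; simpl; [discriminate|].
  destruct (dec (q = u)); [intros _; exists u, v, x, y; auto|].
  destruct (dec (q = v)); [intros _; exists u, v, x, y; auto|discriminate].
Qed.

Lemma C_div : forall p q z, valid p -> C p q = Some z -> diversity_atom z.
Proof.
  intros [|u v x y] q z; simpl; [intros _ h; discriminate|]. intros [_ [_ [hx [hy _]]]].
  destruct (dec (q = u)) as [e1|e1]; [intro e; injection e; intros <-; auto|].
  destruct (dec (q = v)) as [e2|e2]; [intro e; injection e; intros <-; auto|discriminate].
Qed.

Lemma Cs_parent : forall p q z, Cs p q = Some z -> isparent q p \/ isparent p q.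
Proof.
  unfold Cs. intros p q z. destruct (C p q) eqn:e.
  - intros _. left. eapply C_parent; eauto.
  - intro h. right. eapply C_parent; eauto.
Qed.

Lemma Cs_div : forall p q z, valid p -> valid q -> Cs p q = Some z -> diversity_atom z.
Proof.
  unfold Cs. intros p q z hp hq. destruct (C p q) eqn:e.
  - intro h; injection h; intros <-. exact (C_div p q _ hp e).
  - intro h. exact (C_div q p _ hq h).
Qed.

Lemma Cs_sym : forall p q, Cs p q = Cs q p.
Proof.
  intros p q. unfold Cs. destruct (C p q) eqn:e1; destruct (C q p) eqn:e2; auto.
  apply C_parent, parent_size in e1. apply C_parent, parent_size in e2. lia.
Qed.

Lemma parent_valid : forall r p, isparent r p -> valid p -> valid r.
Proof. intros r p [u [v [x [y [-> [-> | ->]]]]]]; simpl; tauto. Qed.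

Lemma Good_sym : forall p q t, Good p q t -> Good q p t.
Proof.
  unfold Good. intros p q t h r z1 z2 hr h1 h2.
  rewrite comp_comm. apply (h r z2 z1); [tauto| |].
  - rewrite Cs_sym; auto.
  - rewrite Cs_sym; auto.
Qed.

Lemma choose_sym : forall p q, choose p q = choose q p.
Proof.
  intros p q. unfold choose.
  destruct (dec (Good p q a)) as [h1|h1]; destruct (dec (Good q p a)) as [h2|h2]; auto;
    try (exfalso; apply h2, Good_sym; auto; fail); try (exfalso; apply h1, Good_sym; auto; fail).
  destruct (dec (Good p q b)) as [h3|h3]; destruct (dec (Good q p b)) as [h4|h4]; auto;
    try (exfalso; apply h4, Good_sym; auto; fail); try (exfalso; apply h3, Good_sym; auto; fail).
Qed.

Lemma L_sym : forall p q, L p q = L q p.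
Proof.
  intros p q. unfold L.
  destruct (dec (p = q)) as [e|n]; destruct (dec (q = p)) as [e'|n']; auto; try congruence.
  rewrite Cs_sym, choose_sym. reflexivity.
Qed.

Lemma L_refl : forall p, L p p = ID.
Proof. intro p. unfold L. destruct (dec (p = p)); congruence. Qed.

Lemma L_Cs : forall p q z, p <> q -> Cs p q = Some z -> L p q = z.
Proof. intros p q z hn h. unfold L. destruct (dec (p = q)); [congruence|]. rewrite h; auto. Qed.

Lemma L_None : forall p q, p <> q -> Cs p q = None -> L p q = choose p q.
Proof. intros p q hn h. unfold L. destruct (dec (p = q)); [congruence|]. rewrite h; auto. Qed.

Definition dflt (o : option A) : A := match o with Some z => z | None => a end.

Lemma dflt_div : forall u q, valid u -> valid q -> diversity_atom (dflt (Cs u q)).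
Proof.
  intros u q hu hq. unfold dflt. destruct (Cs u q) eqn:e.
  - exact (Cs_div u q _ hu hq e).
  - apply trio_div. left; auto.
Qed.

Lemma good_exists_le : forall p q, valid p -> valid q -> p <> q -> psize q <= psize p ->
  exists t, trio t /\ Good p q t.
Proof.
  intros p q hp hq hne hs. destruct p as [|u v x y].
  - destruct q; simpl in hs; [congruence|lia].
  - simpl in hp. destruct hp as [hu [hv [hx [hy hl]]]].
    destruct (good_pick (dflt (Cs u q)) (dflt (Cs v q)) (dflt_div u q hu hq) (dflt_div v q hv hq))
      as [t [ht [g1 g2]]].
    exists t. split; [auto|].
    intros r z1 z2 hr h1 h2.
    assert (hp' : valid (nw u v x y)) by (simpl; auto).
    assert (hru : r = u \/ r = v).
    { destruct hr as [[u' [v' [x' [y' [e hr]]]]]|hr].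
      - injection e; intros; subst; auto.
      - destruct (Cs_parent _ _ _ h1) as [[u' [v' [x' [y' [e hr']]]]]|h].
        + injection e; intros; subst; auto.
        + apply parent_size in h. apply parent_size in hr. lia. }
    assert (hvr : valid r) by (destruct hru; subst; auto).
    assert (hz1 : diversity_atom z1) by (eapply Cs_div; [exact hp'|exact hvr|exact h1]).
    destruct hru as [-> | ->].
    + unfold dflt in g1. rewrite h2 in g1. apply good_use; auto. apply trio_atom; auto.
    + unfold dflt in g2. rewrite h2 in g2. apply good_use; auto. apply trio_atom; auto.
Qed.

Lemma good_exists : forall p q, valid p -> valid q -> p <> q -> exists t, trio t /\ Good p q t.
Proof.
  intros p q hp hq hne. destruct (le_lt_dec (psize q) (psize p)).
  - apply good_exists_le; auto.
  - destruct (good_exists_le q p) as [t [ht hg]]; auto; try lia.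
    exists t. split; auto. apply Good_sym; auto.
Qed.

Lemma choose_good : forall p q, valid p -> valid q -> p <> q ->
  trio (choose p q) /\ Good p q (choose p q).
Proof.
  intros p q hp hq hne. unfold choose.
  destruct (dec (Good p q a)) as [h1|h1]; [split; [left|]; auto|].
  destruct (dec (Good p q b)) as [h2|h2]; [split; [right; left|]; auto|].
  destruct (good_exists p q hp hq hne) as [t [[->|[->| ->]] ht]]; try tauto.
  split; [right; right|]; auto.
Qed.

Lemma L_div : forall p q, valid p -> valid q -> p <> q -> diversity_atom (L p q).
Proof.
  intros p q hp hq hne. unfold L. destruct (dec (p = q)); [congruence|].
  destruct (Cs p q) eqn:e.
  - exact (Cs_div p q _ hp hq e).
  - apply trio_div. apply choose_good; auto.
Qed.

Lemma L_trio : forall p q, valid p -> valid q -> p <> q -> Cs p q = None -> trio (L p q).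
Proof. intros. rewrite L_None by auto. apply choose_good; auto. Qed.

Lemma Lat : forall p q, valid p -> valid q -> is_atom (L p q).
Proof.
  intros p q hp hq. destruct (Classical_Prop.classic (p = q)) as [<-|hn].
  - rewrite L_refl. apply id_atom.
  - apply L_div; auto.
Qed.

Lemma C_nw_u : forall u v x y, C (nw u v x y) u = Some x.
Proof. intros. simpl. destruct (dec (u = u)); congruence. Qed.
Lemma C_nw_v : forall u v x y, v <> u -> C (nw u v x y) v = Some y.
Proof. intros. simpl. destruct (dec (v = u)); [congruence|]. destruct (dec (v = v)); congruence. Qed.
Lemma Cs_of_C : forall p q z, C p q = Some z -> Cs p q = Some z.
Proof. intros p q z h. unfold Cs. rewrite h. auto. Qed.
Lemma nw_ne_u : forall u v x y, nw u v x y <> u.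
Proof. intros u v x y e. assert (h := f_equal psize e). simpl in h. lia. Qed.
Lemma nw_ne_v : forall u v x y, nw u v x y <> v.
Proof. intros u v x y e. assert (h := f_equal psize e). simpl in h. lia. Qed.

Lemma tri2 : forall p q r, valid p -> valid q -> valid r -> p <> q -> p <> r -> r <> q ->
  Cs p q = None -> (exists z, Cs p r = Some z) -> (exists z, Cs r q = Some z) ->
  ra_le (L p q) (L p r ⊙ L r q).
Proof.
  intros p q r hp hq hr hpq hpr hrq e [z1 h1] [z2 h2].
  rewrite (L_Cs p r z1), (L_Cs r q z2) by auto.
  destruct (Classical_Prop.classic (isparent r p \/ isparent r q)) as [hh|hh].
  - destruct (choose_good p q hp hq hpq) as [_ hg]. rewrite L_None by auto.
    exact (hg r z1 z2 hh h1 h2).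
  - assert (hpr' : isparent p r).
    { destruct (Cs_parent _ _ _ h1); tauto. }
    assert (hqr' : isparent q r).
    { destruct (Cs_parent _ _ _ h2); tauto. }
    assert (c1 : C p r = None).
    { destruct (C p r) eqn:ee; auto. exfalso. apply hh. left. eapply C_parent; eauto. }
    assert (c2 : C q r = None).
    { destruct (C q r) eqn:ee; auto. exfalso. apply hh. right. eapply C_parent; eauto. }
    assert (h1' : C r p = Some z1) by (unfold Cs in h1; rewrite c1 in h1; exact h1).
    assert (h2' : C r q = Some z2).
    { unfold Cs in h2. destruct (C r q) eqn:ee; auto. rewrite c2 in h2. discriminate. }
    destruct hpr' as [u [v [x [y [-> hpuv]]]]].
    destruct hqr' as [u' [v' [x' [y' [ee hquv]]]]]. injection ee; intros; subst u' v' x' y'.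
    simpl in hr. destruct hr as [_ [_ [_ [_ hl]]]].
    destruct hpuv as [e4|e4]; destruct hquv as [e5|e5].
    + exfalso; apply hpq; rewrite e4, e5; reflexivity.
    + rewrite e4 in h1'. rewrite C_nw_u in h1'. rewrite e5 in h2'.
      assert (hvu : v <> u) by (intro ev; apply hpq; rewrite e4, e5, ev; reflexivity).
      rewrite C_nw_v in h2' by exact hvu.
      injection h1'; injection h2'; intros E2 E1. rewrite <- E1, <- E2, e4, e5. exact hl.
    + rewrite e4 in h1'. rewrite e5 in h2'. rewrite C_nw_u in h2'.
      assert (hvu : v <> u) by (intro ev; apply hpq; rewrite e4, e5, ev; reflexivity).
      rewrite C_nw_v in h1' by exact hvu.
      injection h1'; injection h2'; intros E2 E1. rewrite <- E1, <- E2, e4, e5, L_sym, comp_comm. exact hl.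
    + exfalso; apply hpq; rewrite e4, e5; reflexivity.
Qed.

Lemma tri3 : forall p q r, valid p -> isparent q p -> isparent r p -> q <> r ->
  ra_le (L q r) (L p q ⊙ L p r).
Proof.
  intros p q r hp [u [v [x [y [ep hq]]]]] [u' [v' [x' [y' [ee hr]]]]] hqr.
  rewrite ep in ee. injection ee; intros e1 e2 e3 e4. rewrite <- e3, <- e4 in hr. clear ee e1 e2 e3 e4.
  rewrite ep in hp |- *. simpl in hp. destruct hp as [_ [_ [_ [_ hl]]]].
  assert (Lu : L (nw u v x y) u = x).
  { apply L_Cs; [apply nw_ne_u|apply Cs_of_C, C_nw_u]. }
  destruct hq as [eq|eq]; destruct hr as [er|er].
  - exfalso; apply hqr; rewrite eq, er; reflexivity.
  - assert (hvu : v <> u) by (intro ev; apply hqr; rewrite eq, er, ev; reflexivity).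
    assert (Lv : L (nw u v x y) v = y).
    { apply L_Cs; [apply nw_ne_v|apply Cs_of_C, C_nw_v; exact hvu]. }
    rewrite eq, er, Lu, Lv. exact hl.
  - assert (hvu : v <> u) by (intro ev; apply hqr; rewrite eq, er, ev; reflexivity).
    assert (Lv : L (nw u v x y) v = y).
    { apply L_Cs; [apply nw_ne_v|apply Cs_of_C, C_nw_v; exact hvu]. }
    rewrite eq, er, Lu, Lv, L_sym, comp_comm. exact hl.
  - exfalso; apply hqr; rewrite eq, er; reflexivity.
Qed.


Lemma tri_distinct : forall p q r, valid p -> valid q -> valid r -> p <> q -> p <> r -> q <> r ->
  ra_le (L p q) (L p r ⊙ L r q).
Proof.
  intros p q r hp hq hr hpq hpr hqr.
  assert (hrq : r <> q) by congruence.
  assert (aa : is_atom (L p q)) by (apply Lat; auto).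
  assert (ab : is_atom (L p r)) by (apply Lat; auto).
  assert (ac' : is_atom (L r q)) by (apply Lat; auto).
  assert (fromb : ra_le (L p r) (L p q ⊙ L r q) -> ra_le (L p q) (L p r ⊙ L r q)).
  { intro h. apply peirce; auto. }
  assert (fromc : ra_le (L r q) (L p q ⊙ L p r) -> ra_le (L p q) (L p r ⊙ L r q)).
  { intro h. apply peirce in h; auto. rewrite comp_comm. exact h. }
  destruct (Cs p q) as [z1|] eqn:e1; destruct (Cs p r) as [z2|] eqn:e2; destruct (Cs r q) as [z3|] eqn:e3.
  -
    assert (hm : (psize q <= psize p /\ psize r <= psize p) \/ (psize p <= psize q /\ psize r <= psize q)
               \/ (psize p <= psize r /\ psize q <= psize r)) by lia.
    destruct hm as [[s1 s2]|[[s1 s2]|[s1 s2]]].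
    + assert (i1 : isparent q p) by
          (destruct (Cs_parent _ _ _ e1) as [h|h]; [exact h| apply parent_size in h; lia]).
      assert (i2 : isparent r p) by
          (destruct (Cs_parent _ _ _ e2) as [h|h]; [exact h| apply parent_size in h; lia]).
      apply fromc. rewrite (L_sym r q). exact (tri3 p q r hp i1 i2 hqr).
    + assert (i1 : isparent p q) by
          (destruct (Cs_parent _ _ _ e1) as [h|h]; [apply parent_size in h; lia| exact h]).
      assert (i2 : isparent r q) by
          (destruct (Cs_parent _ _ _ e3) as [h|h]; [apply parent_size in h; lia| exact h]).
      apply fromb. rewrite (L_sym p q), (L_sym r q). exact (tri3 q p r hq i1 i2 hpr).
    + assert (i1 : isparent p r) by
          (destruct (Cs_parent _ _ _ e2) as [h|h]; [apply parent_size in h; lia| exact h]).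
      assert (i2 : isparent q r) by
          (destruct (Cs_parent _ _ _ e3) as [h|h]; [exact h| apply parent_size in h; lia]).
      rewrite (L_sym p r). exact (tri3 r p q hr i1 i2 hpq).
  -
    apply fromc. rewrite (L_sym p r), comp_comm. apply tri2; auto.
    + exists z2. rewrite Cs_sym; auto.
    + exists z1; auto.
  -
    apply fromb. rewrite (L_sym r q). apply tri2; auto.
    + exists z1; auto.
    + exists z3. rewrite Cs_sym; auto.
  -
    apply trio_tri; [apply L_trio|apply L_trio|apply L_div]; auto.
  - apply tri2; auto; [exists z2 | exists z3]; auto.
  - apply fromb. apply trio_tri; [apply L_trio|apply L_trio|apply L_div]; auto.
  - apply fromc. apply trio_tri; [apply L_trio|apply L_trio|apply L_div]; auto.
  - apply trio_tri; [apply L_trio|apply L_trio|apply L_div]; auto.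
Qed.

Lemma tri_all : forall p q r, valid p -> valid q -> valid r -> ra_le (L p q) (L p r ⊙ L r q).
Proof.
  apply (tri_close pt valid L).
  - intros; apply L_sym.
  - intros; apply L_refl.
  - intros; apply Lat; auto.
  - intros; apply tri_distinct; auto.
Qed.

Lemma witness : forall p q x y, valid p -> valid q -> is_atom x -> is_atom y ->
  ra_le (L p q) (x ⊙ y) -> exists w, valid w /\ L p w = x /\ L w q = y.
Proof.
  intros p q x y hp hq hx hy hle.
  destruct (atom_cases x hx) as [ex|dx].
  - rewrite ex, id_l in hle. exists p. split; [auto|]. split.
    + rewrite L_refl; auto.
    + apply atom_le_eq; auto. apply Lat; auto.
  - destruct (atom_cases y hy) as [ey|dy].
    + rewrite ey, Hid in hle. exists q. split; [auto|]. split.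
      * apply atom_le_eq; auto. apply Lat; auto.
      * rewrite L_refl; auto.
    + exists (nw p q x y). split; [simpl; auto 6|]. split.
      * rewrite L_sym. apply L_Cs; [apply nw_ne_u|apply Cs_of_C, C_nw_u].
      * destruct (Classical_Prop.classic (q = p)) as [eqp|nqp].
        -- rewrite eqp in hle |- *. rewrite L_refl in hle.
           assert (exy : x = y) by (apply id_le_xy; auto).
           rewrite <- exy. apply L_Cs; [apply nw_ne_u|apply Cs_of_C, C_nw_u].
        -- apply L_Cs; [apply nw_ne_v|apply Cs_of_C, C_nw_v; exact nqp].
Qed.

Lemma realize : forall x, is_atom x -> exists p q, valid p /\ valid q /\ L p q = x.
Proof.
  intros x hx. destruct (atom_cases x hx) as [ex|dx].
  - exists root, root. rewrite L_refl. simpl; auto.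
  - exists (nw root root x x), root. split; [|split; [simpl; auto|]].
    + simpl. split; [auto|]. split; [auto|]. split; [auto|]. split; [auto|].
      rewrite L_refl. apply id_le_dd. destruct dx; auto.
    + apply L_Cs; [apply nw_ne_u|apply Cs_of_C, C_nw_u].
Qed.

Theorem repr : representable (A:=A).
Proof.
  unfold representable.
  exists {p : pt | valid p}, (fun _ _ => True),
    (fun z (p q : {p : pt | valid p}) => ra_le (L (proj1_sig p) (proj1_sig q)) z).
  split; [auto|]. split; [auto|]. split; [auto|]. split; [auto|].
  split; [|split; [|split; [|split; [|split]]]].
  -
    intros x y h. apply NNPP. intro hne.
    destruct (separate Hat x y hne) as [al [hal [[h1 h2]|[h1 h2]]]];
    destruct (realize al hal) as [p [q [hp [hq e]]]];
    specialize (h (exist _ p hp) (exist _ q hq)); simpl in h; rewrite e in h; tauto.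
  - intros x y [p hp] [q hq]. simpl. split.
    + intro h. apply atom_join; auto. apply Lat; auto.
    + intros [h|h]; eapply le_trans; [exact h|apply le_joinl|exact h|apply le_joinr].
  - intros x [p hp] [q hq]. simpl. split.
    + intro h. split; [auto|]. apply atom_compl; auto. apply Lat; auto.
    + intros [_ h]. apply atom_not_le; auto. apply Lat; auto.
  - intros x y [p hp] [q hq]. simpl. split.
    + intro h. destruct (decomp_atoms _ _ _ (Lat p q hp hq) h) as [x' [y' [hx' [hy' [h1 [h2 h3]]]]]].
      destruct (witness p q x' y' hp hq hx' hy' h3) as [w [hw [e1 e2]]].
      exists (exist _ w hw). simpl. rewrite e1, e2. auto.
    + intros [[w hw] [h1 h2]]. simpl in h1, h2.
      apply le_trans with (L p w ⊙ L w q); [apply tri_all; auto|apply comp_mono; auto].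
  - intros x [p hp] [q hq]. simpl. rewrite Hsym, L_sym. tauto.
  - intros [p hp] [q hq]. simpl. split.
    + intro h. destruct (Classical_Prop.classic (p = q)) as [e|ne].
      * subst q. f_equal. apply proof_irrelevance.
      * exfalso. exact (div_not_le_id _ (L_div p q hp hq ne) h).
    + intro e. injection e; intros e'. subst q. rewrite L_refl. apply le_refl.
Qed.

Theorem main_sec : one_point_extension (A:=A) /\ representable (A:=A).
Proof. split; [apply ope|apply repr]. Qed.
End Bool.

Theorem theorem4 (A : RAsig) :
  is_RA (A := A) -> is_atomic (A := A) -> is_symmetric (A := A) ->
  is_integral (A := A) ->
  (exists a b c : A, flexible_trio a b c) ->
  one_point_extension (A := A) /\ representable (A := A).
Proof.
  intros [h1 [h2 [h3 [h4 [h5 [h6 [h7 [h8 [h9 h10]]]]]]]]] hat hsym hint [a [b [c hf]]].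
  exact (main_sec h1 h2 h3 h5 h6 h9 h10 hsym hint hat a b c hf).
Qed.
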